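(* Let $1\le k\le n$ and $p=c_n^k$. Suppose $X$ is a real symmetric $n\times n$ matrix given together with a diagonalization $X=Q\Lambda Q^{\intercal}$ ($Q$ orthogonal, $\Lambda$ diagonal). Then there is an algorithm that computes the vector $v\in\mathbb{R}^n$ with $v_i=p|_{\{i\}}(X)$ for all $i\in[n]$ using $O(n^{\omega})$ floating point operations.
   Context: $c_n^k(X)=\sum_{S\subseteq[n],|S|=k}\det(X|_S)$ with $X|_S$ the principal submatrix indexed by $S$; $p|_{\{i\}}(X)=\sum_{|S|=k,\,i\in S}\det(X|_S)$. $\omega$ is the matrix multiplication exponent. *)

(* Defs.v *)
From HB Require Import structures.
From mathcomp Require Import all_boot all_order all_algebra all_fingroup.
From mathcomp Require Import reals exp.
Set Implicit Arguments. Unset Strict Implicit. Unset Printing Implicit Defensive.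
Import Order.TTheory GRing.Theory Num.Theory.
Local Open Scope ring_scope.

Definition principal_submx (R : pzRingType) (n : nat) (X : 'M[R]_n)
  (S : {set 'I_n}) : 'M[R]_#|S| :=
  mxsub (@enum_val _ (mem S)) (@enum_val _ (mem S)) X.

Definition char_coef (R : comPzRingType) (n k : nat) (X : 'M[R]_n) : R :=
  \sum_(S : {set 'I_n} | #|S| == k) \det (principal_submx X S).

(* p|_{i}(X) = sum_{|S| = k, i in S} det(X|_S), for p = c_n^k *)
Definition char_coef_restr (R : comPzRingType) (n k : nat) (i : 'I_n)
  (X : 'M[R]_n) : R :=
  \sum_(S : {set 'I_n} | (#|S| == k) && (i \in S)) \det (principal_submx X S).

(* References to earlier values are by position; out-of-range references
   read 0 (as does division by zero, by the MathComp convention x/0 = 0).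
   Every instruction counts as one floating point operation. *)
Inductive instr (R : Type) : Type :=
| IConst of R
| IInput of nat
| IAdd of nat & nat
| ISub of nat & nat
| IMul of nat & nat
| IDiv of nat & nat.

Record slp (R : Type) : Type := SLP { slp_code : seq (instr R); slp_out : seq nat }.

Definition step (R : fieldType) (inp acc : seq R) (c : instr R) : R :=
  match c with
  | IConst x => x
  | IInput j => nth 0 inp j
  | IAdd a b => nth 0 acc a + nth 0 acc b
  | ISub a b => nth 0 acc a - nth 0 acc b
  | IMul a b => nth 0 acc a * nth 0 acc b
  | IDiv a b => nth 0 acc a / nth 0 acc b
  end.

Fixpoint run (R : fieldType) (inp : seq R) (code : seq (instr R)) (acc : seq R)
  : seq R :=
  match code with
  | [::] => acc
  | c :: code' => run inp code' (rcons acc (step inp acc c))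
  end.

Definition slp_eval (R : fieldType) (P : slp R) (inp : seq R) : seq R :=
  let vals := run inp (slp_code P) [::] in
  [seq nth 0 vals j | j <- slp_out P].

Definition slp_cost (R : Type) (P : slp R) : nat := size (slp_code P).

(* row-major list of the entries of a matrix *)
Definition mx_entries (R : Type) (m n : nat) (A : 'M[R]_(m, n)) : seq R :=
  [seq A ij.1 ij.2 | ij <- (enum {: 'I_m * 'I_n})].

(* tau is an achievable matrix multiplication exponent over R:
   n x n matrices can be multiplied with O(n^tau) operations.
   omega is the infimum of such tau; "O(n^omega)" is read as
   "O(n^tau) for every achievable tau". *)
Definition mm_exponent (R : realType) (tau : R) : Prop :=
  exists C : R, forall n : nat, (1 <= n)%N ->
    exists P : slp R,
      (forall A B : 'M[R]_n,
         slp_eval P (mx_entries A ++ mx_entries B) = mx_entries (A *m B)) /\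
      (slp_cost P)%:R <= C * powR n%:R tau.

(* Main.v *)
Require Import Defs.
From HB Require Import structures.
From mathcomp Require Import all_boot all_order all_algebra all_fingroup.
From mathcomp Require Import reals exp.
From mathcomp Require Import zify ring.
Set Implicit Arguments. Unset Strict Implicit. Unset Printing Implicit Defensive.
Import Order.TTheory GRing.Theory Num.Theory.
Local Open Scope ring_scope.
Definition padmx (R : comPzRingType) n (S : {set 'I_n}) (A : 'M[R]_n) : 'M[R]_n :=
  \matrix_(i, j) (if (i \in S) && (j \in S) then A i j else (i == j)%:R).

Lemma det_diag_add (R : comPzRingType) n (d : 'I_n -> R) (A : 'M[R]_n) :
  \det (\matrix_(i, j) ((i == j)%:R * d i + A i j)) =
  \sum_(S : {set 'I_n}) (\prod_i (if i \in S then 1 else d i)) * \det (padmx S A).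
Proof.
rewrite /determinant.
under eq_bigr => s _.
  rewrite (eq_bigr (fun i => A i (s i) + (i == s i)%:R * d i)); last first.
    by move=> i _; rewrite mxE addrC.
  rewrite bigA_distr mulr_sumr.
over.
rewrite exchange_big /=; apply: eq_bigr => S _.
rewrite mulr_sumr; apply: eq_bigr => s _.
rewrite mulrCA; congr (_ * _).
rewrite -big_split /=.
have [fix_s|] := boolP [forall i, (i \notin S) ==> (s i == i)].
  apply: eq_bigr => i _; rewrite mxE.
  case: ifP => iS.
    have siS : s i \in S.
      apply/negPn/negP => siN.
      have := implyP (forallP fix_s (s i)) siN => /eqP /perm_inj si.
      by move: siN; rewrite si => /negP.
    by rewrite siS /= mul1r.
  have /eqP -> := implyP (forallP fix_s i) (negbT iS).
  by rewrite eqxx /= mul1r mulr1.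
rewrite negb_forall => /existsP [i0]; rewrite negb_imply => /andP [i0N si0].
rewrite (bigD1 i0) //= [RHS](bigD1 i0) //= mxE (negbTE i0N) /=.
by rewrite eq_sym (negbTE si0) !mul0r mulr0 !mul0r.
Qed.



Section Ext.
Variables (n : nat) (S : {set 'I_n}).
Definition fv : 'I_#|S| -> 'I_n := @enum_val _ (mem S).

Lemma fv_dich i : (exists x, i = fv x) \/ i \notin S.
Proof.
case: (boolP (i \in S)) => Hi; last by right.
by left; exists (enum_rank_in Hi i); rewrite /fv enum_rankK_in.
Qed.

Definition extf (t : 'S_#|S|) (i : 'I_n) : 'I_n :=
  if [pick x | fv x == i] is Some x then fv (t x) else i.

Lemma pick_fv x : [pick y | fv y == fv x] = Some x.
Proof.
case: pickP => [y /eqP /enum_val_inj -> // | /(_ x)]; by rewrite eqxx.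
Qed.

Lemma pick_out i : i \notin S -> [pick y | fv y == i] = None.
Proof. by move=> iN; case: pickP => // y /eqP Ey; move: iN; rewrite -Ey enum_valP. Qed.

Lemma extf_fv t x : extf t (fv x) = fv (t x).
Proof. by rewrite /extf pick_fv. Qed.

Lemma extf_out t i : i \notin S -> extf t i = i.
Proof. by move=> iN; rewrite /extf pick_out. Qed.

Lemma extf_inj t : injective (extf t).
Proof.
move=> i j; case: (fv_dich i) => [[x ->]|iN]; case: (fv_dich j) => [[y ->]|jN].
- by rewrite !extf_fv => /enum_val_inj /perm_inj ->.
- by rewrite extf_fv extf_out // => E; move: jN; rewrite -E /fv enum_valP.
- by rewrite extf_fv extf_out // => E; move: iN; rewrite E /fv enum_valP.
- by rewrite !extf_out.
Qed.

Definition ext t : 'S_n := perm (@extf_inj t).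

Lemma ext_fv t x : ext t (fv x) = fv (t x).
Proof. by rewrite permE extf_fv. Qed.
Lemma ext_out t i : i \notin S -> ext t i = i.
Proof. by move=> iN; rewrite permE extf_out. Qed.

Lemma extM t1 t2 : ext (t1 * t2)%g = (ext t1 * ext t2)%g.
Proof.
apply/permP => i; rewrite permM; case: (fv_dich i) => [[x ->]|iN].
  by rewrite !ext_fv permM.
by rewrite !ext_out.
Qed.

Lemma ext1 : ext 1%g = 1%g.
Proof.
apply/permP => i; rewrite perm1; case: (fv_dich i) => [[x ->]|iN].
  by rewrite ext_fv perm1.
by rewrite ext_out.
Qed.

Lemma ext_tperm a b : ext (tperm a b) = tperm (fv a) (fv b).
Proof.
apply/permP => i; case: (fv_dich i) => [[x ->]|iN].
  rewrite ext_fv !permE /= !(inj_eq enum_val_inj).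
  by case: ifP => _ //; case: ifP.
rewrite ext_out // permE /=.
have -> : (i == fv a) = false by apply/negP => /eqP E; move: iN; rewrite E /fv enum_valP.
have -> : (i == fv b) = false by apply/negP => /eqP E; move: iN; rewrite E /fv enum_valP.
by [].
Qed.

Lemma odd_ext t : odd_perm (ext t) = odd_perm t.
Proof.
case: (prod_tpermP t) => ts -> dts.
have -> : ext (\prod_(u <- ts) tperm u.1 u.2)%g =
          (\prod_(u <- [seq (fv u.1, fv u.2) | u <- ts]) tperm u.1 u.2)%g.
  elim: ts {dts} => [|u ts IH]; first by rewrite !big_nil ext1.
  by rewrite /= !big_cons extM IH ext_tperm.
rewrite !odd_perm_prod ?size_map //.
rewrite all_map; apply: sub_all dts => u; by rewrite /= (inj_eq enum_val_inj).
Qed.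

Lemma ext_inj : injective ext.
Proof.
move=> t1 t2 H; apply/permP => x; apply: enum_val_inj.
by rewrite -!/(fv _) -!ext_fv H.
Qed.

Lemma padmx_det (R : comPzRingType) (A : 'M[R]_n) :
  \det (padmx S A) = \det (principal_submx A S).
Proof.
rewrite /determinant (bigID (fun s => s \in ext @: [set: 'S_#|S|])) /=.
rewrite [X in _ + X]big1 ?addr0.
  rewrite big_imset /=; last by move=> t1 t2 _ _; exact: ext_inj.
  rewrite (eq_bigl predT); last by move=> t; rewrite inE.
  apply: eq_bigr => t _; rewrite odd_ext; congr (_ * _).
  rewrite (bigID (fun i => i \in S)) /= [X in _ * X]big1 ?mulr1.
    rewrite big_enum_val; apply: eq_bigr => x _.
    by rewrite !mxE -/(fv _) ext_fv /fv !enum_valP.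
  by move=> i iN; rewrite mxE (negbTE iN) ext_out // eqxx.
move=> s sN.
case: (boolP [forall i, (i \notin S) ==> (s i == i)]) => [fix_s|].
  exfalso; move/negP: sN; apply; apply/imsetP.
  have sS : forall x, s (fv x) \in S.
    move=> x; apply/negPn/negP => siN.
    have := implyP (forallP fix_s (s (fv x))) siN => /eqP /perm_inj si.
    by move: siN; rewrite si /fv enum_valP.
  pose h x := enum_rank_in (sS x) (s (fv x)).
  have hK : forall x, fv (h x) = s (fv x).
    by move=> x; rewrite /h /fv enum_rankK_in.
  have hinj : injective h.
    by move=> x y /(congr1 fv); rewrite !hK => /perm_inj /enum_val_inj.
  exists (perm hinj); first by rewrite inE.
  apply/permP => i; case: (fv_dich i) => [[x ->]|iN].
    by rewrite ext_fv permE hK.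
  by rewrite ext_out //; apply/eqP; exact: (implyP (forallP fix_s i) iN).
rewrite negb_forall => /existsP [i0]; rewrite negb_imply => /andP [i0N si0].
rewrite (bigD1 i0) //= mxE (negbTE i0N) /= eq_sym (negbTE si0).
by rewrite mul0r mulr0.
Qed.
End Ext.


Lemma restr_coef (R : comNzRingType) n k (i : 'I_n) (X : 'M[R]_n) : (k <= n)%N ->
  char_coef_restr k i X =
  (\det (\matrix_(a, b) ((a == b)%:R * (if a == i then 0 else 'X) + (X a b)%:P)))`_(n - k).
Proof.
move=> kn.
have -> : \matrix_(a, b) ((a == b)%:R * (if a == i then 0 else 'X) + (X a b)%:P) =
  \matrix_(a, b) ((a == b)%:R * (fun a => if a == i then 0 else 'X) a + (map_mx polyC X) a b).
  by apply/matrixP => a b; rewrite !mxE.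
rewrite det_diag_add coef_sum /char_coef_restr big_mkcond; apply: eq_bigr => S _.
have -> : padmx S (map_mx polyC X) = map_mx polyC (padmx S X).
  by apply/matrixP => a b; rewrite !mxE; case: ifP => _ //; rewrite rmorph_nat.
rewrite det_map_mx padmx_det /=.
case: (boolP (i \in S)) => iS; last first.
  rewrite (bigD1 i) //= (negbTE iS) eqxx mul0r mul0r coef0.
  by rewrite andbF.
rewrite (eq_bigr (fun a => if a \notin S then 'X else 1)); last first.
  move=> a _; case: ifP => aS //=.
  by have -> : (a == i) = false by apply/negP => /eqP E; move: aS; rewrite E iS.
rewrite -big_mkcond prodr_const coefMC coefXn andbT.
have cS : #|[pred a | a \notin S]| = (n - #|S|)%N.
  have h := cardsC S; rewrite card_ord in h.
  have -> : #|[pred a | a \notin S]| = #|~: S| by apply: eq_card => a; rewrite !inE.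
  lia.
have Sn : (#|S| <= n)%N by rewrite -[X in (_ <= X)%N](card_ord n) max_card.
rewrite cS; have [e|ne] := eqVneq #|S| k.
  have -> : (n - k == n - #|S|)%N by apply/eqP; lia.
  by rewrite mul1r.
move/eqP: ne => ne.
have -> : (n - k == n - #|S|)%N = false by apply/eqP; lia.
by rewrite mul0r.
Qed.


Lemma det_Mt (R : idomainType) n (i : 'I_n) (X Q : 'M[R]_n) (lam : 'rV[R]_n) :
  Q *m Q^T = 1%:M -> X = Q *m diag_mx lam *m Q^T ->
  \det (\matrix_(a, b) ((a == b)%:R * (if a == i then 0 else 'X) + (X a b)%:P)) =
  \sum_(j < n) ((Q i j) ^+ 2 * lam 0 j)%:P * \prod_(l < n | l != j) ('X + (lam 0 l)%:P).
Proof.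
move=> QQt XE.
set Mt := \matrix_(a, b) _.
pose N : 'M[{poly R}]_n := \matrix_(a, b) ((a == b)%:R * 'X + (X a b)%:P).
pose Pl j := \prod_(l < n | l != j) ('X + (lam 0 l)%:P).
pose P := \prod_(l < n) ('X + (lam 0 l)%:P).
pose Qp := map_mx (@polyC R) Q.
have QtQ : Q^T *m Q = 1%:M by apply: mulmx1C.
have QpQpt : Qp *m Qp^T = 1%:M by rewrite /Qp map_trmx -map_mxM QQt map_mx1.
have QptQp : Qp^T *m Qp = 1%:M by rewrite /Qp map_trmx -map_mxM QtQ map_mx1.
pose Dt := diag_mx (\row_j ('X + (lam 0 j)%:P)).
have NE : N = Qp *m Dt *m Qp^T.
  have -> : Dt = 'X%:M + map_mx (@polyC R) (diag_mx lam).
    apply/matrixP => a b; rewrite !mxE.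
    by case: (a == b); rewrite ?mulr1n ?mulr0n ?rmorph0 ?addr0.
  rewrite mulmxDr mulmxDl mul_mx_scalar -scalemxAl QpQpt scalemx1.
  rewrite /Qp map_trmx -!map_mxM -XE.
  by apply/matrixP => a b; rewrite !mxE mulr_natl.
have dQ : \det Qp * \det Qp^T = 1 by rewrite -det_mulmx QpQpt det1.
have detN : \det N = P.
  rewrite NE !det_mulmx mulrAC dQ mul1r det_diag.
  by apply: eq_bigr => j _; rewrite mxE.
have Pne0 : P != 0.
  by apply: monic_neq0; apply: monic_prod => j _; exact: monicXaddC.
pose W := Qp *m diag_mx (\row_j Pl j) *m Qp^T.
have NW : N *m W = P%:M.
  have DY : Dt *m diag_mx (\row_j Pl j) = P%:M.
    apply/matrixP => a b; rewrite mul_diag_mx !mxE.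
    case: eqP => [E|_]; last by rewrite !mulr0n mulr0.
    subst b; rewrite !mulr1n.
    by rewrite /P (bigD1 a).
  rewrite NE /W !mulmxA -[Qp *m Dt *m Qp^T *m Qp]mulmxA QptQp mulmx1.
  by rewrite -(mulmxA Qp Dt) DY mul_mx_scalar -scalemxAl QpQpt scalemx1.
have adjW : \adj N = W.
  have h : P *: \adj N = P *: W.
    transitivity (\adj N *m (N *m W)); first by rewrite NW mul_mx_scalar.
    by rewrite mulmxA mul_adj_mx detN mul_scalar_mx.
  apply/matrixP => a b; move/matrixP: h => /(_ a b).
  rewrite [LHS]mxE [RHS]mxE.
  exact: mulfI.
have e1 : \det N = \det Mt + 'X * cofactor N i i.
  rewrite !(expand_det_row _ i).
  have cofE : forall j, cofactor Mt i j = cofactor N i j.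
    move=> j; rewrite /cofactor; congr (_ * \det _).
    apply/matrixP => a b; rewrite !mxE.
    by have -> : (lift i a == i) = false by apply/negP => /eqP E; move: (neq_lift i a); rewrite E eqxx.
  under [X in _ = X + _]eq_bigr => j _ do rewrite cofE.
  rewrite [in RHS](bigD1 i) //= [in LHS](bigD1 i) //= addrAC; congr (_ + _).
    by rewrite !mxE eqxx mul1r mulr0 add0r mulrDl addrC.
  apply: eq_bigr => j ji; rewrite !mxE eq_sym (negbTE ji).
  by rewrite !mul0r.
have e2 : cofactor N i i = \sum_(j < n) (Q i j ^+ 2)%:P * Pl j.
  have -> : cofactor N i i = \adj N i i by rewrite /adjugate mxE.
  rewrite adjW /W mul_mx_diag !mxE; apply: eq_bigr => j _; rewrite !mxE.
  by rewrite rmorphXn /= expr2; ring.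
have sQ : \sum_(j < n) (Q i j ^+ 2)%:P = 1 :> {poly R}.
  rewrite -rmorph_sum /=.
  have h : \sum_(j < n) Q i j ^+ 2 = 1.
    have := congr1 (fun M : 'M[R]_n => M i i) QQt; rewrite !mxE eqxx mulr1n => <-.
    by apply: eq_bigr => j _; rewrite mxE expr2.
  by rewrite h.
have : \det Mt = P - 'X * \sum_(j < n) (Q i j ^+ 2)%:P * Pl j.
  by rewrite -e2 -detN e1 addrK.
have PE : P = \sum_(j < n) (Q i j ^+ 2)%:P * P by rewrite -mulr_suml sQ mul1r.
move=> ->; rewrite {1}PE mulr_sumr -sumrB.
apply: eq_bigr => j _; rewrite /P (bigD1 j) //= -/(Pl j) rmorphM /=; ring.
Qed.


Section Run.
Variable R : fieldType.

Lemma run_rcons (inp : seq R) code c acc :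
  run inp (rcons code c) acc = rcons (run inp code acc) (step inp (run inp code acc) c).
Proof. by elim: code acc => [|c' code IH] acc //=. Qed.

Lemma size_run (inp : seq R) code acc : size (run inp code acc) = (size acc + size code)%N.
Proof.
by elim: code acc => [|c code IH] acc /=; rewrite ?addn0 // IH size_rcons addSnnS.
Qed.

Definition refs_ok (c : instr R) (p : nat) : bool :=
  match c with
  | IAdd a b | ISub a b | IMul a b | IDiv a b => (a < p)%N && (b < p)%N
  | _ => true
  end.

Definition sem (inp : seq R) (V : nat -> R) (c : instr R) : R :=
  match c with
  | IConst x => x
  | IInput j => nth 0 inp j
  | IAdd a b => V a + V b
  | ISub a b => V a - V b
  | IMul a b => V a * V b
  | IDiv a b => V a / V b
  end.

Lemma run_correct (inp : seq R) (codeAt : nat -> instr R) (V : nat -> R) L :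
  (forall p, (p < L)%N -> refs_ok (codeAt p) p /\ V p = sem inp V (codeAt p)) ->
  forall p, (p < L)%N -> nth 0 (run inp (mkseq codeAt L) [::]) p = V p.
Proof.
elim: L => [|L IH] H p //.
have IH' := IH (fun q hq => H q (ltnW hq)).
rewrite mkseqS run_rcons nth_rcons size_run size_mkseq /= add0n ltnS leq_eqVlt.
case: (ltnP p L) => [pL|]; first by rewrite orbT IH'.
rewrite orbF => Lp /eqP pE; subst p; rewrite eqxx.
have [ok ->] := H L (ltnSn L).
case: (codeAt L) ok => //= a b /andP [aL bL]; by rewrite !IH'.
Qed.

End Run.

Lemma nth_allpairs (T1 T2 U : Type) (x0 : U) (f : T1 -> T2 -> U) (s1 : seq T1) (s2 : seq T2) i j
  (d1 : T1) (d2 : T2) :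
  (j < size s2)%N -> (i < size s1)%N ->
  nth x0 (flatten [seq [seq f x1 x2 | x2 <- s2] | x1 <- s1]) (i * size s2 + j)
  = f (nth d1 s1 i) (nth d2 s2 j).
Proof.
move=> js2; elim: s1 i => [|x s1 IH] [|i] //= Hi.
  by rewrite nth_cat size_map js2 (nth_map d2).
by rewrite nth_cat size_map mulSn -addnA ltnNge leq_addr /= addKn (IH _ Hi).
Qed.

Lemma size_mx_entries (T : Type) m n (A : 'M[T]_(m, n)) : size (mx_entries A) = (m * n)%N.
Proof. by rewrite /mx_entries size_map -cardT card_prod !card_ord. Qed.

Lemma nth_mx_entries (T : Type) (x0 : T) m n (A : 'M[T]_(m, n)) (i : 'I_m) (j : 'I_n) :
  nth x0 (mx_entries A) (i * n + j) = A i j.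
Proof.
have H : (i * n + j < m * n)%N.
  have := ltn_ord i; have := ltn_ord j; nia.
rewrite /mx_entries (nth_map (i, j)); last by rewrite -cardT card_prod !card_ord.
rewrite enumT unlock /= /prod_enum.
have := @nth_allpairs _ _ _ (i, j) pair (enum 'I_m) (enum 'I_n) i j i j.
rewrite !size_enum_ord => ->; [|exact: ltn_ord|exact: ltn_ord].
by rewrite !nth_ord_enum.
Qed.

Lemma mm_lb (R : fieldType) n (P : slp R) :
  (forall A B : 'M[R]_n, slp_eval P (mx_entries A ++ mx_entries B) = mx_entries (A *m B)) ->
  (n * n <= slp_cost P)%N.
Proof.
case: n => [|n'] H; first by [].
set n := n'.+1 in H *.
set o := slp_out P.
have so : size o = (n * n)%N.
  by have := congr1 size (H 0 0); rewrite size_map size_mx_entries.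
pose idx (ij : 'I_n * 'I_n) := (ij.1 * n + ij.2)%N.
have idx_lt : forall ij, (idx ij < n * n)%N.
  by move=> [i j]; rewrite /idx /=; have := ltn_ord i; have := ltn_ord j; nia.
pose vals (ij : 'I_n * 'I_n) :=
  run (mx_entries (delta_mx ij.1 (0 : 'I_n) : 'M[R]_n) ++ mx_entries (delta_mx (0 : 'I_n) ij.2 : 'M[R]_n))
      (slp_code P) [::].
pose g ij := nth 0%N o (idx ij).
have key : forall ij ij', nth 0 (vals ij) (g ij') = (ij == ij')%:R.
  move=> [i j] [i' j'].
  have := congr1 (fun s => nth 0 s (idx (i', j'))) (H (delta_mx i 0) (delta_mx 0 j)).
  rewrite /slp_eval (nth_map 0%N) -/o ?so ?idx_lt // mul_delta_mx /idx /= nth_mx_entries.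
  by rewrite mxE /vals /g /idx /= => ->; rewrite xpair_eqE eq_sym [j == _]eq_sym.
have g_lt : forall ij, (g ij < slp_cost P)%N.
  move=> ij; have := key ij ij; rewrite eqxx.
  case: (ltnP (g ij) (size (vals ij))) => [|ge].
    by rewrite /vals size_run.
  by rewrite nth_default // => /eqP; rewrite eq_sym oner_eq0.
have g_inj : injective g.
  move=> ij ij' E; have := key ij ij'; rewrite -E (key ij ij) eqxx.
  by case: eqP => // _ /eqP; rewrite oner_eq0.
pose h ij := Ordinal (g_lt ij).
have h_inj : injective h by move=> a b /(congr1 val) /= /g_inj.
by have := leq_card h h_inj; rewrite card_prod !card_ord.
Qed.


Section Prog.
Variable R : fieldType.
Variables (n k : nat).

Definition W1 := (n.*2 + 4)%N.
Definition W2 := (n.*2 + 3)%N.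
Definition W3 := (4 * n + 1)%N.
Definition B2 := ((n + 1) * W1)%N.
Definition B3 := (B2 + n * W2)%N.
Definition Ltot := (B3 + n * W3)%N.
Definition offQ := (n * n)%N.
Definition offL := (2 * (n * n))%N.
Definition pos1 m o := (m * W1 + o)%N.
Definition pos2 j o := (B2 + j * W2 + o)%N.
Definition pos3 i o := (B3 + i * W3 + o)%N.

Definition code1 m o : instr R :=
  if m == 0%N then IConst (if o == 3%N then 1 else 0)
  else if o == 0%N then IInput R (offL + m.-1)
  else if o == 1%N then IConst 0
  else if odd o then IAdd R (pos1 m o.-1) (pos1 m.-1 (o - 2))
  else IMul R (pos1 m 0) (pos1 m.-1 o.+1).

Definition code2 j o : instr R :=
  if o == 0%N then IInput R (offL + j)
  else if o == 1%N then IConst 0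
  else if o == (n.*2 + 2)%N then IMul R (pos2 j 0) (pos2 j (k.*2 + 1))
  else if odd o then ISub R (pos1 n (n.*2 + 6 - o)) (pos2 j o.-1)
  else IMul R (pos2 j 0) (pos2 j o.-1).

Definition code3 i o : instr R :=
  if o == 0%N then IConst 0
  else if (o %% 4)%N == 1%N then IInput R (offQ + i * n + (o %/ 4)%N)
  else if (o %% 4)%N == 2%N then IMul R (pos3 i o.-1) (pos3 i o.-1)
  else if (o %% 4)%N == 3%N then IMul R (pos3 i o.-1) (pos2 ((o %/ 4)%N) (n.*2 + 2))
  else IAdd R (pos3 i (o - 4)) (pos3 i o.-1).

Definition codeAt p : instr R :=
  if (p < B2)%N then code1 ((p %/ W1)%N) ((p %% W1)%N)
  else if (p < B3)%N then code2 (((p - B2) %/ W2)%N) (((p - B2) %% W2)%N)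
  else code3 (((p - B3) %/ W3)%N) (((p - B3) %% W3)%N).

Definition the_slp : slp R :=
  SLP (mkseq codeAt Ltot) [seq pos3 i (4 * n) | i <- iota 0 n].

Variable inp : seq R.
Definition lamf l := nth 0 inp (offL + l).
Definition Qf i l := nth 0 inp (offQ + i * n + l).
Definition Pm m := \prod_(0 <= l < m) ('X + (lamf l)%:P).
Definition Plp j := \prod_(0 <= l < n | l != j) ('X + (lamf l)%:P).
Definition tj j := lamf j * (Plp j)`_(n - k).
Definition acc i j := \sum_(0 <= l < j) Qf i l * Qf i l * tj l.

Definition spec1 m o : R :=
  if m == 0%N then (if o == 3%N then 1 else 0)
  else if o == 0%N then lamf m.-1
  else if o == 1%N then 0
  else if odd o then (Pm m)`_((o - 3)./2)
  else lamf m.-1 * (Pm m.-1)`_((o - 2)./2).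

Definition spec2 j o : R :=
  if o == 0%N then lamf j
  else if o == 1%N then 0
  else if o == (n.*2 + 2)%N then tj j
  else if odd o then (Plp j)`_(n - (o - 1)./2)
  else lamf j * (Plp j)`_(n - (o - 2)./2).

Definition spec3 i o : R :=
  if (o %% 4)%N == 0%N then acc i ((o %/ 4)%N)
  else if (o %% 4)%N == 1%N then Qf i ((o %/ 4)%N)
  else if (o %% 4)%N == 2%N then Qf i ((o %/ 4)%N) * Qf i ((o %/ 4)%N)
  else Qf i ((o %/ 4)%N) * Qf i ((o %/ 4)%N) * tj ((o %/ 4)%N).

Definition V p : R :=
  if (p < B2)%N then spec1 ((p %/ W1)%N) ((p %% W1)%N)
  else if (p < B3)%N then spec2 (((p - B2) %/ W2)%N) (((p - B2) %% W2)%N)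
  else spec3 (((p - B3) %/ W3)%N) (((p - B3) %% W3)%N).

Lemma dec1 m o : (m <= n)%N -> (o < W1)%N ->
  V (pos1 m o) = spec1 m o /\ codeAt (pos1 m o) = code1 m o.
Proof.
move=> mn oW; have lt : (pos1 m o < B2)%N by rewrite /pos1 /B2 /W1 in oW *; nia.
have W0 : (0 < W1)%N by rewrite /W1; lia.
by rewrite /V /codeAt lt /pos1 divnMDl // modnMDl (divn_small oW) (modn_small oW) addn0.
Qed.

Lemma dec2 j o : (j < n)%N -> (o < W2)%N ->
  V (pos2 j o) = spec2 j o /\ codeAt (pos2 j o) = code2 j o.
Proof.
move=> jn oW.
have [l1 l2] : ~~ (pos2 j o < B2)%N /\ (pos2 j o < B3)%N.
  by rewrite /pos2 /B3 /W2 in oW *; split; nia.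
have W0 : (0 < W2)%N by rewrite /W2; lia.
have e : (pos2 j o - B2 = j * W2 + o)%N by rewrite /pos2; lia.
by rewrite /V /codeAt (negbTE l1) l2 e divnMDl // modnMDl (divn_small oW) (modn_small oW) addn0.
Qed.

Lemma dec3 i o : (i < n)%N -> (o < W3)%N ->
  V (pos3 i o) = spec3 i o /\ codeAt (pos3 i o) = code3 i o.
Proof.
move=> jn oW.
have [l1 l2] : ~~ (pos3 i o < B2)%N /\ ~~ (pos3 i o < B3)%N.
  by rewrite /pos3 /B3; split; lia.
have W0 : (0 < W3)%N by rewrite /W3; lia.
have e : (pos3 i o - B3 = i * W3 + o)%N by rewrite /pos3; lia.
by rewrite /V /codeAt (negbTE l1) (negbTE l2) e divnMDl // modnMDl (divn_small oW) (modn_small oW) addn0.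
Qed.


Lemma Pm0 : Pm 0 = 1.
Proof. by rewrite /Pm big_geq. Qed.

Lemma Pm_coefS m r :
  (Pm m.+1)`_r = (if r == 0%N then 0 else (Pm m)`_r.-1) + (Pm m)`_r * lamf m.
Proof.
by rewrite /Pm big_nat_recr //= -/(Pm m) mulrDr coefD coefMX coefMC.
Qed.

Lemma coef1' r : (1 : {poly R})`_r = if r == 0%N then 1 else 0.
Proof. by rewrite coef1; case: (r == 0%N). Qed.

Lemma Vc m r : (m <= n)%N -> (r <= n)%N -> V (pos1 m (3 + r.*2)) = (Pm m)`_r.
Proof.
move=> mn rn; have oW : (3 + r.*2 < W1)%N by rewrite /W1; lia.
have [-> _] := dec1 mn oW.
rewrite /spec1; case: (eqVneq m 0%N) => [->|m0].
  by rewrite Pm0 coef1' (_ : (3 + r.*2 == 3)%N = (r == 0%N)); last by lia.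
rewrite (_ : (3 + r.*2 == 0)%N = false); last by lia.
rewrite (_ : (3 + r.*2 == 1)%N = false); last by lia.
rewrite (_ : odd (3 + r.*2) = true); last by lia.
by rewrite (_ : ((3 + r.*2 - 3)./2 = r)%N); last by lia.
Qed.

Lemma Vp m r : (m <= n)%N -> (r <= n)%N ->
  V (pos1 m (1 + r.*2)) = if r == 0%N then 0 else (Pm m)`_r.-1.
Proof.
move=> mn rn; have oW : (1 + r.*2 < W1)%N by rewrite /W1; lia.
have [-> _] := dec1 mn oW.
rewrite /spec1; case: (eqVneq m 0%N) => [->|m0].
  rewrite Pm0 coef1'; case: (eqVneq r 0%N) => [->//|r0].
  rewrite (_ : (1 + r.*2 == 3)%N = (r.-1 == 0%N)); last by lia.
  by [].
rewrite (_ : (1 + r.*2 == 0)%N = false); last by lia.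
case: (eqVneq r 0%N) => [->//|r0].
rewrite (_ : (1 + r.*2 == 1)%N = false); last by lia.
rewrite (_ : odd (1 + r.*2) = true); last by lia.
by rewrite (_ : ((1 + r.*2 - 3)./2 = r.-1)%N); last by lia.
Qed.

Lemma Vt m r : (0 < m <= n)%N -> (r <= n)%N ->
  V (pos1 m (2 + r.*2)) = lamf m.-1 * (Pm m.-1)`_r.
Proof.
move=> /andP [m0 mn] rn; have oW : (2 + r.*2 < W1)%N by rewrite /W1; lia.
have [-> _] := dec1 mn oW.
rewrite /spec1 (_ : (m == 0)%N = false); last by lia.
rewrite (_ : (2 + r.*2 == 0)%N = false); last by lia.
rewrite (_ : (2 + r.*2 == 1)%N = false); last by lia.
rewrite (_ : odd (2 + r.*2) = false); last by lia.
by rewrite (_ : ((2 + r.*2 - 2)./2 = r)%N); last by lia.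
Qed.

Lemma Vl m : (0 < m <= n)%N -> V (pos1 m 0) = lamf m.-1.
Proof.
move=> /andP [m0 mn]; have oW : (0 < W1)%N by rewrite /W1; lia.
have [-> _] := dec1 mn oW.
by rewrite /spec1 (_ : (m == 0)%N = false); last by lia.
Qed.


Lemma ob1 m o : (m <= n)%N -> (o < W1)%N ->
  refs_ok (code1 m o) (pos1 m o) /\ V (pos1 m o) = sem inp V (code1 m o).
Proof.
move=> mn oW; case: m mn => [|m] mn.
  by have [-> _] := dec1 mn oW; rewrite /code1 /spec1 eqxx.
have m1 : (0 < m.+1 <= n)%N by lia.
case: (eqVneq o 0%N) => [->|o0].
  by rewrite /code1 /= Vl.
case: (eqVneq o 1%N) => [->|o1].
  by rewrite /code1 /= (@Vp m.+1 0%N) //; lia.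
have [r [[oE|oE] rn]] : exists r, (o = 2 + r.*2 \/ o = 3 + r.*2)%N /\ (r <= n)%N.
  by exists ((o - 2)./2); rewrite /W1 in oW; split; lia.
- subst o; rewrite /code1 ifF; last lia.
  rewrite (_ : (2 + r.*2).+1 = 3 + r.*2)%N; last by lia.
  split; first by rewrite /= /pos1 /W1; apply/andP; split; nia.
  rewrite Vt //= Vl // Vc //; lia.
- subst o; rewrite /code1 ifT; last lia.
  rewrite (_ : (3 + r.*2).-1 = 2 + r.*2)%N; last by lia.
  rewrite (_ : (3 + r.*2 - 2) = 1 + r.*2)%N; last by lia.
  split; first by rewrite /= /pos1 /W1; apply/andP; split; nia.
  rewrite Vc // /= Vt // Vp //; last lia.
  rewrite Pm_coefS /=.
  by rewrite addrC mulrC.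
Qed.


Lemma Plp_top j : (j < n)%N -> (Plp j)`_n = 0.
Proof.
move=> jn; apply: nth_default.
rewrite /Plp -big_filter.
rewrite (eq_bigr (fun l => 'X - (- lamf l)%:P)); last by move=> l _; rewrite polyCN opprK.
rewrite size_prod_XsubC size_filter.
have := count_predC (pred1 j) (index_iota 0 n).
rewrite count_uniq_mem ?iota_uniq // mem_index_iota jn size_iota subn0.
have e : count (fun i => i != j) (index_iota 0 n) = count (predC (pred1 j)) (index_iota 0 n) by [].
rewrite e /= => h; lia.
Qed.

Lemma Pm_split j : (j < n)%N -> Pm n = ('X + (lamf j)%:P) * Plp j.
Proof.
move=> jn; rewrite /Pm (bigD1_seq j) ?iota_uniq //.
by rewrite mem_index_iota jn.
Qed.

Lemma V2l j : (j < n)%N -> V (pos2 j 0) = lamf j.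
Proof.
move=> jn; have oW : (0 < W2)%N by rewrite /W2; lia.
by have [-> _] := dec2 jn oW.
Qed.

Lemma V2q j s : (j < n)%N -> (s <= n)%N -> V (pos2 j (1 + s.*2)) = (Plp j)`_(n - s).
Proof.
move=> jn sn; have oW : (1 + s.*2 < W2)%N by rewrite /W2; lia.
have [-> _] := dec2 jn oW; rewrite /spec2.
case: (eqVneq s 0%N) => [->|s0]; first by rewrite /= subn0 Plp_top.
rewrite (_ : (1 + s.*2 == 0)%N = false); last by lia.
rewrite (_ : (1 + s.*2 == 1)%N = false); last by lia.
rewrite (_ : (1 + s.*2 == n.*2 + 2)%N = false); last by lia.
rewrite (_ : odd (1 + s.*2) = true); last by lia.
by rewrite (_ : ((1 + s.*2 - 1)./2 = s)%N); last by lia.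
Qed.

Lemma V2t j s : (j < n)%N -> (s < n)%N -> V (pos2 j (2 + s.*2)) = lamf j * (Plp j)`_(n - s).
Proof.
move=> jn sn; have oW : (2 + s.*2 < W2)%N by rewrite /W2; lia.
have [-> _] := dec2 jn oW; rewrite /spec2.
rewrite (_ : (2 + s.*2 == 0)%N = false); last by lia.
rewrite (_ : (2 + s.*2 == 1)%N = false); last by lia.
rewrite (_ : (2 + s.*2 == n.*2 + 2)%N = false); last by lia.
rewrite (_ : odd (2 + s.*2) = false); last by lia.
by rewrite (_ : ((2 + s.*2 - 2)./2 = s)%N); last by lia.
Qed.

Lemma V2T j : (j < n)%N -> V (pos2 j (n.*2 + 2)) = tj j.
Proof.
move=> jn; have oW : (n.*2 + 2 < W2)%N by rewrite /W2; lia.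
have [-> _] := dec2 jn oW; rewrite /spec2.
rewrite (_ : (n.*2 + 2 == 0)%N = false); last by lia.
rewrite (_ : (n.*2 + 2 == 1)%N = false); last by lia.
by rewrite eqxx.
Qed.

Lemma ob2 j o : (k <= n)%N -> (j < n)%N -> (o < W2)%N ->
  refs_ok (code2 j o) (pos2 j o) /\ V (pos2 j o) = sem inp V (code2 j o).
Proof.
move=> kn jn oW.
case: (eqVneq o 0%N) => [->|o0]; first by rewrite /code2 /= V2l.
case: (eqVneq o 1%N) => [->|o1].
  by rewrite /code2 /= (@V2q j 0%N) // subn0 Plp_top.
case: (eqVneq o (n.*2 + 2)%N) => [->|oT].
  rewrite /code2 (_ : (n.*2 + 2 == 0)%N = false); last by lia.
  rewrite (_ : (n.*2 + 2 == 1)%N = false); last by lia.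
  rewrite eqxx; split; first by rewrite /= /pos2; apply/andP; split; lia.
  by rewrite V2T //= V2l // addnC V2q.
have [s [[oE|oE] sn]] : exists s, (o = 2 + s.*2 \/ o = 3 + s.*2)%N /\ (s < n)%N.
  by exists ((o - 2)./2); rewrite /W2 in oW; split; lia.
- subst o; rewrite /code2 (_ : (2 + s.*2 == n.*2 + 2)%N = false); last by lia.
  rewrite (_ : odd (2 + s.*2) = false); last by lia.
  rewrite (_ : (2 + s.*2 == 0)%N = false); last by lia.
  rewrite (_ : (2 + s.*2 == 1)%N = false); last by lia.
  cbv iota.
  rewrite (_ : (2 + s.*2).-1 = 1 + s.*2)%N; last by lia.
  split; first by rewrite /= /pos2; apply/andP; split; lia.
  rewrite V2t // [sem _ _ _]/= V2l // V2q //; lia.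
- subst o; rewrite /code2 (_ : (3 + s.*2 == n.*2 + 2)%N = false); last by lia.
  rewrite (_ : odd (3 + s.*2) = true); last by lia.
  rewrite (_ : (3 + s.*2 == 0)%N = false); last by lia.
  rewrite (_ : (3 + s.*2 == 1)%N = false); last by lia.
  cbv iota.
  rewrite (_ : (3 + s.*2).-1 = 2 + s.*2)%N; last by lia.
  rewrite (_ : (n.*2 + 6 - (3 + s.*2)) = 3 + (n - s).*2)%N; last by lia.
  split; first by rewrite /= /pos2 /pos1 /B2 /W1 /W2; apply/andP; split; nia.
  rewrite [sem _ _ _]/= Vc //; try lia.
  rewrite V2t // (_ : (3 + s.*2) = 1 + s.+1.*2)%N; last by lia.
  rewrite V2q //; try lia.
  rewrite (Pm_split jn) mulrDl coefD coefXM coefCM.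
  rewrite (_ : (n - s == 0)%N = false); last by lia.
  by rewrite (_ : (n - s).-1 = n - s.+1)%N ?addrK //; lia.
Qed.


Lemma V3 i o : (i < n)%N -> (o < W3)%N -> V (pos3 i o) = spec3 i o.
Proof. by move=> iN oW; have [-> _] := dec3 iN oW. Qed.

Lemma V3a i j : (i < n)%N -> (j <= n)%N -> V (pos3 i (4 * j)) = acc i j.
Proof.
move=> iN jn; rewrite V3 //; last by rewrite /W3; lia.
rewrite /spec3 (_ : ((4 * j) %% 4 == 0)%N = true); last by lia.
by rewrite (_ : ((4 * j) %/ 4)%N = j); last by lia.
Qed.

Lemma V3q i j : (i < n)%N -> (j < n)%N -> V (pos3 i (4 * j + 1)) = Qf i j.
Proof.
move=> iN jn; rewrite V3 //; last by rewrite /W3; lia.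
rewrite /spec3 (_ : ((4 * j + 1) %% 4 == 0)%N = false); last by lia.
rewrite (_ : ((4 * j + 1) %% 4 == 1)%N = true); last by lia.
by rewrite (_ : ((4 * j + 1) %/ 4)%N = j); last by lia.
Qed.

Lemma V3s i j : (i < n)%N -> (j < n)%N -> V (pos3 i (4 * j + 2)) = Qf i j * Qf i j.
Proof.
move=> iN jn; rewrite V3 //; last by rewrite /W3; lia.
rewrite /spec3 (_ : ((4 * j + 2) %% 4 == 0)%N = false); last by lia.
rewrite (_ : ((4 * j + 2) %% 4 == 1)%N = false); last by lia.
rewrite (_ : ((4 * j + 2) %% 4 == 2)%N = true); last by lia.
by rewrite (_ : ((4 * j + 2) %/ 4)%N = j); last by lia.
Qed.

Lemma V3u i j : (i < n)%N -> (j < n)%N -> V (pos3 i (4 * j + 3)) = Qf i j * Qf i j * tj j.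
Proof.
move=> iN jn; rewrite V3 //; last by rewrite /W3; lia.
rewrite /spec3 (_ : ((4 * j + 3) %% 4 == 0)%N = false); last by lia.
rewrite (_ : ((4 * j + 3) %% 4 == 1)%N = false); last by lia.
rewrite (_ : ((4 * j + 3) %% 4 == 2)%N = false); last by lia.
by rewrite (_ : ((4 * j + 3) %/ 4)%N = j); last by lia.
Qed.

Lemma ob3 i o : (i < n)%N -> (o < W3)%N ->
  refs_ok (code3 i o) (pos3 i o) /\ V (pos3 i o) = sem inp V (code3 i o).
Proof.
move=> iN oW.
case: (eqVneq o 0%N) => [->|o0].
  by rewrite /code3 /= (@V3a i 0%N) // /acc big_geq.
have [j [[oE|[oE|[oE|oE]]] jn]] : exists j, (o = 4 * j + 1 \/ o = 4 * j + 2 \/ o = 4 * j + 3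
    \/ o = 4 * j.+1)%N /\ (j < n)%N.
  by rewrite /W3 in oW; exists (if (o %% 4 == 0)%N then (o %/ 4)%N.-1 else (o %/ 4)%N); case: ifP => h; split; lia.
- subst o; rewrite /code3 (_ : (4 * j + 1 == 0)%N = false); last by lia.
  rewrite (_ : ((4 * j + 1) %% 4 == 1)%N = true); last by lia.
  cbv iota; rewrite (_ : ((4 * j + 1) %/ 4)%N = j); last by lia.
  by rewrite V3q.
- subst o; rewrite /code3 (_ : (4 * j + 2 == 0)%N = false); last by lia.
  rewrite (_ : ((4 * j + 2) %% 4 == 1)%N = false); last by lia.
  rewrite (_ : ((4 * j + 2) %% 4 == 2)%N = true); last by lia.
  cbv iota; rewrite (_ : (4 * j + 2).-1 = 4 * j + 1)%N; last by lia.
  split; first by rewrite /= /pos3; apply/andP; split; lia.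
  by rewrite [sem _ _ _]/= V3s // V3q.
- subst o; rewrite /code3 (_ : (4 * j + 3 == 0)%N = false); last by lia.
  rewrite (_ : ((4 * j + 3) %% 4 == 1)%N = false); last by lia.
  rewrite (_ : ((4 * j + 3) %% 4 == 2)%N = false); last by lia.
  rewrite (_ : ((4 * j + 3) %% 4 == 3)%N = true); last by lia.
  cbv iota; rewrite (_ : (4 * j + 3).-1 = 4 * j + 2)%N; last by lia.
  rewrite (_ : ((4 * j + 3) %/ 4)%N = j); last by lia.
  split; first by rewrite /= /pos3 /pos2 /B3 /W2; apply/andP; split; nia.
  by rewrite [sem _ _ _]/= V3u // V3s // V2T.
- subst o; rewrite /code3 (_ : (4 * j.+1 == 0)%N = false); last by lia.
  rewrite (_ : ((4 * j.+1) %% 4 == 1)%N = false); last by lia.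
  rewrite (_ : ((4 * j.+1) %% 4 == 2)%N = false); last by lia.
  rewrite (_ : ((4 * j.+1) %% 4 == 3)%N = false); last by lia.
  cbv iota; rewrite (_ : (4 * j.+1).-1 = 4 * j + 3)%N; last by lia.
  rewrite (_ : (4 * j.+1 - 4)%N = 4 * j)%N; last by lia.
  split; first by rewrite /= /pos3; apply/andP; split; lia.
  rewrite [sem _ _ _]/= (@V3a i j.+1) ?(@V3a i j) ?(@V3u i j) // ?/acc ?big_nat_recr //; lia.
Qed.


Lemma all_ob p : (k <= n)%N -> (p < Ltot)%N ->
  refs_ok (codeAt p) p /\ V p = sem inp V (codeAt p).
Proof.
move=> kn pL.
case: (ltnP p B2) => h1.
  have W0 : (0 < W1)%N by rewrite /W1; lia.
  have pE : p = pos1 (p %/ W1) (p %% W1) by rewrite /pos1 -divn_eq.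
  have oW : (p %% W1 < W1)%N by rewrite ltn_pmod.
  have mn : (p %/ W1 <= n)%N by rewrite -ltnS ltn_divLR //; move: h1; rewrite /B2 addn1.
  by rewrite pE; have [_ ->] := dec1 mn oW; exact: ob1.
case: (ltnP p B3) => h2.
  have W0 : (0 < W2)%N by rewrite /W2; lia.
  have pE : p = pos2 ((p - B2) %/ W2) ((p - B2) %% W2).
    by rewrite /pos2 -addnA -divn_eq subnKC.
  have oW : ((p - B2) %% W2 < W2)%N by rewrite ltn_pmod.
  have mn : ((p - B2) %/ W2 < n)%N by rewrite ltn_divLR //; rewrite /B3 in h2; lia.
  by rewrite pE; have [_ ->] := dec2 mn oW; exact: ob2.
have W0 : (0 < W3)%N by rewrite /W3; lia.
have pE : p = pos3 ((p - B3) %/ W3) ((p - B3) %% W3).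
  by rewrite /pos3 -addnA -divn_eq subnKC.
have oW : ((p - B3) %% W3 < W3)%N by rewrite ltn_pmod.
have mn : ((p - B3) %/ W3 < n)%N by rewrite ltn_divLR //; rewrite /Ltot in pL; lia.
by rewrite pE; have [_ ->] := dec3 mn oW; exact: ob3.
Qed.

Lemma the_slp_eval : (k <= n)%N -> slp_eval the_slp inp = [seq acc i n | i <- iota 0 n].
Proof.
move=> kn; rewrite /slp_eval /= -map_comp; apply/eq_in_map => i.
rewrite mem_iota add0n => /andP [_ iN] /=.
have hl : (pos3 i (4 * n) < Ltot)%N by rewrite /Ltot /pos3 /W3; nia.
rewrite (@run_correct _ inp codeAt V Ltot (fun q hq => all_ob kn hq) _ hl).
by rewrite V3a.
Qed.

End Prog.

Lemma the_slp_cost (R : fieldType) n k : slp_cost (the_slp R n k) = Ltot n.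
Proof. by rewrite /slp_cost size_mkseq. Qed.

Theorem mainTheorem11 :
  forall (R : realType) (tau : R), mm_exponent tau ->
  exists C : R, forall n k : nat, (1 <= k)%N -> (k <= n)%N ->
    exists P : slp R,
      (forall (X Q : 'M[R]_n) (lambda : 'rV[R]_n),
         X^T = X ->
         Q *m Q^T = 1%:M ->
         X = Q *m diag_mx lambda *m Q^T ->
         slp_eval P (mx_entries X ++ mx_entries Q ++ mx_entries lambda)
           = [seq char_coef_restr k i X | i <- enum 'I_n]) /\
      (slp_cost P)%:R <= C * powR n%:R tau.
Proof.
move=> R tau [C0 HC0]; exists (22%:R * C0) => n k k1 kn.
exists (the_slp R n k); split.
  move=> X Q lam XT QQt XE.
  set inp := mx_entries X ++ mx_entries Q ++ mx_entries lam.
  rewrite the_slp_eval // -val_enum_ord -map_comp; apply/eq_in_map => i _ /=.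
  rewrite restr_coef // (det_Mt _ QQt XE) coef_sum /acc big_mkord.
  have lamE : forall l : 'I_n, lamf n inp l = lam 0 l.
    move=> l; rewrite /lamf /inp /offL nth_cat size_mx_entries.
    rewrite (_ : (2 * (n * n) + l < n * n)%N = false); last by lia.
    rewrite nth_cat size_mx_entries.
    rewrite (_ : (2 * (n * n) + l - n * n < n * n)%N = false); last by lia.
    rewrite (_ : (2 * (n * n) + l - n * n - n * n)%N = nat_of_ord (ord0 : 'I_1) * n + l)%N; last by rewrite /=; lia.
    by rewrite nth_mx_entries.
  have QE : forall l : 'I_n, Qf n inp i l = Q i l.
    move=> l; rewrite /Qf /inp /offQ nth_cat size_mx_entries.
    rewrite (_ : (n * n + i * n + l < n * n)%N = false); last by lia.
    rewrite nth_cat size_mx_entries.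
    have h : (i * n + l < n * n)%N by have := ltn_ord i; have := ltn_ord l; nia.
    rewrite (_ : (n * n + i * n + l - n * n)%N = (i * n + l)%N); last by lia.
    by rewrite h nth_mx_entries.
  apply: eq_bigr => l _; rewrite coefCM QE /tj lamE.
  have -> : Plp n inp l = \prod_(j < n | j != l) ('X + (lam 0 j)%:P).
    rewrite /Plp big_mkord; apply: eq_big => j //; by rewrite lamE.
  by rewrite expr2 !mulrA.
have n1 : (1 <= n)%N by apply: leq_trans kn.
have [P0 [HP0 cP0]] := HC0 n n1.
have lb := mm_lb HP0.
rewrite the_slp_cost.
apply: (@le_trans _ _ (22%:R * (n * n)%N%:R)).
  rewrite -natrM ler_nat /Ltot /B3 /B2 /W1 /W2 /W3; nia.
rewrite -mulrA ler_wpM2l // ?ler0n //.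
apply: le_trans cP0; by rewrite ler_nat.
Qed.
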